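(* Let $U=V=W=\mathbb{C}^2$ with bases $\{u_i\},\{v_j\},\{w_k\}$ and dual bases $\{u^i\},\{v^j\},\{w^k\}$, and set $x^i_j=u^i\otimes v_j$, $y^j_k=v^j\otimes w_k$, $z^k_i=w^k\otimes u_i$. Let $A=\langle x^1_2,x^2_1,x^2_2\rangle\subset U^*\otimes V$, $B=V^*\otimes W$, $C=W^*\otimes U$, and $$T_{BCLR}=\sum_{i,j,k=1}^2 x^i_j\otimes y^j_k\otimes z^k_i-x^1_1\otimes(y^1_1\otimes z^1_1+y^1_2\otimes z^2_1)\in A\otimes B\otimes C.$$ For $t\in\mathbb{C}$ define \begin{align*} p_1(t)&=x^1_2\otimes(y^2_2+y^2_1)\otimes(z^2_2+tz^1_1),\\ p_2(t)&=-(x^1_2-tx^2_2)\otimes y^2_2\otimes(z^2_2+t(z^1_1-z^2_1)),\\ p_3(t)&=x^2_1\otimes(y^2_1+ty^1_2)\otimes(z^2_2+z^1_2),\\ p_4(t)&=(x^2_1-tx^2_2)\otimes(-y^2_1+ty^1_1-ty^1_2)\otimes z^1_2,\\ p_5(t)&=-(x^2_1+x^1_2)\otimes y^2_1\otimes z^2_2, \end{align*} so that $T_{BCLR}=\lim_{t\to 0}\frac1t[p_1(t)+\cdots+p_5(t)]$, and let $E^{BCLR}=\lim_{t\to0}\langle p_1(t),\dots,p_5(t)\rangle\in G(5,A\otimes B\otimes C)$. Define the lines \begin{align*} L_{12}&=\mathbb{P}\big(x^1_2\otimes(v^2\otimes W)\otimes z^2_2\big)=\mathbb{P}\big(x^1_2\otimes\langle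 y^2_1,y^2_2\rangle\otimes z^2_2\big),\\ L_{21}&=\mathbb{P}\big(x^2_1\otimes y^2_1\otimes(W^*\otimes u_2)\big)=\mathbb{P}\big(x^2_1\otimes y^2_1\otimes\langle z^1_2,z^2_2\rangle\big),\\ L_{\alpha}&=\mathbb{P}\big(\langle x^2_1,x^1_2\rangle\otimes y^2_1\otimes z^2_2\big). \end{align*} Then: (1) $\mathbb{P}E^{BCLR}\cap Seg(\mathbb{P}A\times\mathbb{P}B\times\mathbb{P}C)=L_{12}\cup L_{21}\cup L_\alpha$; here the $C$-point $z^2_2$ of $L_{12}$ lies in $W^*\otimes u_2$, the $B$-point $y^2_1$ of $L_{21}$ lies in $v^2\otimes W$, and $L_\alpha$ is the unique line contained in $Seg(\mathbb{P}A\times\mathbb{P}B\times\mathbb{P}C)$ that meets both $L_{12}$ and $L_{21}$ (so it lies in their span). (2) $E^{BCLR}=\langle T_{BCLR}\rangle+\hat L_{12}+\hat L_{21}$. (3) $T_{BCLR}\in \hat T_{L_{12}}Seg(\mathbb{P}A\times\mathbb{P}B\times\mathbb{P}C)+\hat T_{L_{21}}Seg(\mathbb{P}A\times\mathbb{P}B\times\mathbb{P}C)$.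
   Context: For a vector space $X$, $\mathbb{P}X$ is the projective space of lines through the origin, $[x]$ the class of $x\neq0$, and for $Y\subset\mathbb{P}X$, $\hat Y\subset X$ is the corresponding cone; $\langle\cdots\rangle$ denotes linear span, and $G(r,X)$ the Grassmannian of $r$-dimensional subspaces of $X$ (the limit of subspaces is taken in this Grassmannian). $Seg(\mathbb{P}A\times\mathbb{P}B\times\mathbb{P}C)\subset\mathbb{P}(A\otimes B\otimes C)$ is the Segre variety of classes of rank one tensors $[a\otimes b\otimes c]$. The affine tangent space at $[a\otimes b\otimes c]$ is $\hat T_{[a\otimes b\otimes c]}Seg=A\otimes b\otimes c+a\otimes B\otimes c+a\otimes b\otimes C$. For a line $L$ contained in the Segre variety, $\hat T_L Seg$ denotes $\hat T_ySeg+\hat T_zSeg$ for any two distinct points $y,z\in L$ (this is independent of the choice). *)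

(* Defs.v *)
From mathcomp Require Import all_boot all_order all_algebra all_field.
From mathcomp Require Export complex reals.
Set Implicit Arguments.
Unset Strict Implicit.
Unset Printing Implicit Defensive.
Import Order.TTheory GRing.Theory Num.Theory.
Local Open Scope ring_scope.

Section BCLR.
Variable K : numFieldType.

(* index 1 and 2 of the paper, 0-based *)
Definition o1 : 'I_2 := ord0.
Definition o2 : 'I_2 := ord_max.

(* U^* (x) V, V^* (x) W, W^* (x) U : each is K^(2x2), coordinates indexed by pairs *)
Definition M2 := {ffun ('I_2 * 'I_2) -> K^o}.
(* the ambient space (U^*(x)V) (x) (V^*(x)W) (x) (W^*(x)U), which contains A(x)B(x)C *)
Definition X := {ffun ('I_2 * 'I_2) * ('I_2 * 'I_2) * ('I_2 * 'I_2) -> K^o}.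

Definition e2 (i j : 'I_2) : M2 := [ffun p => ((p == (i, j)) : nat)%:R].
(* x^i_j = u^i (x) v_j,  y^j_k = v^j (x) w_k,  z^k_i = w^k (x) u_i *)
Definition xx (i j : 'I_2) : M2 := e2 i j.
Definition yy (j k : 'I_2) : M2 := e2 j k.
Definition zz (k i : 'I_2) : M2 := e2 k i.

Definition tens (a b c : M2) : X := [ffun p => a p.1.1 * b p.1.2 * c p.2].

Definition tensSub (SA SB SC : {vspace M2}) : {vspace X} :=
  <<[seq tens a bc.1 bc.2 | a <- vbasis SA,
                              bc <- [seq (b, c) | b <- vbasis SB, c <- vbasis SC]]>>%VS.

Definition Aspace : {vspace M2} := <<[:: xx o1 o2; xx o2 o1; xx o2 o2]>>%VS.
Definition Bspace : {vspace M2} := fullv.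
Definition Cspace : {vspace M2} := fullv.
Definition ABC : {vspace X} := tensSub Aspace Bspace Cspace.

Definition T_BCLR : X :=
  \sum_(i < 2) \sum_(j < 2) \sum_(k < 2) tens (xx i j) (yy j k) (zz k i)
  - tens (xx o1 o1) (yy o1 o1 ) (zz o1 o1)
  - tens (xx o1 o1) (yy o1 o2) (zz o2 o1).

Definition p1 (t : K) : X :=
  tens (xx o1 o2) (yy o2 o2 + yy o2 o1) (zz o2 o2 + t *: zz o1 o1).
Definition p2 (t : K) : X :=
  - tens (xx o1 o2 - t *: xx o2 o2) (yy o2 o2)
         (zz o2 o2 + t *: (zz o1 o1 - zz o2 o1)).
Definition p3 (t : K) : X :=
  tens (xx o2 o1) (yy o2 o1 + t *: yy o1 o2) (zz o2 o2 + zz o1 o2).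
Definition p4 (t : K) : X :=
  tens (xx o2 o1 - t *: xx o2 o2) (- yy o2 o1 + t *: yy o1 o1 - t *: yy o1 o2)
       (zz o1 o2).
Definition p5 (t : K) : X :=
  - tens (xx o2 o1 + xx o1 o2) (yy o2 o1) (zz o2 o2).

Definition Ecurve (t : K) : {vspace X} :=
  <<[:: p1 t; p2 t; p3 t; p4 t; p5 t]>>%VS.

Definition near0 (P : K -> Prop) : Prop :=
  exists2 d : K, 0 < d & forall t : K, 0 < `|t| < d -> P t.

Definition cvg0 (f : K -> K) (l : K) : Prop :=
  forall e : K, 0 < e -> near0 (fun t => `|f t - l| < e).

(* E = lim_{t -> 0} Et in the Grassmannian G(r, X): there are bases
   (frames) of Et (t near 0, t <> 0) converging to a basis of E. *)
Definition grass_limit (r : nat) (Et : K -> {vspace X}) (E : {vspace X}) : Prop :=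
  exists (f : K -> r.-tuple X) (e : r.-tuple X),
    [/\ near0 (fun t => basis_of (Et t) (f t)),
        (forall (l : 'I_r) p, cvg0 (fun t => tnth (f t) l p) (tnth e l p)) &
        basis_of E e].

(* v is a (nonzero) point of the cone over Seg(PA x PB x PC) *)
Definition isSeg (v : X) : Prop :=
  exists a b c : M2,
    [/\ a \in Aspace, b \in Bspace, c \in Cspace,
        [/\ a != 0, b != 0 & c != 0] & v = tens a b c].

Definition segTan (a b c : M2) : {vspace X} :=
  (tensSub Aspace <[b]> <[c]> + tensSub <[a]> Bspace <[c]>
   + tensSub <[a]> <[b]> Cspace)%VS.

(* a projective line (2-dim linear subspace) contained in the Segre *)
Definition segLine (L : {vspace X}) : Prop :=
  \dim L = 2 /\ forall v, v \in L -> v != 0 -> isSeg v.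

Definition meets (L M : {vspace X}) : Prop :=
  exists2 v, v != 0 & v \in (L :&: M)%VS.

Definition v2W : {vspace M2} := <<[:: yy o2 o1; yy o2 o2]>>%VS.
Definition Wu2 : {vspace M2} := <<[:: zz o1 o2; zz o2 o2]>>%VS.

Definition hatL12 : {vspace X} := tensSub <[xx o1 o2]> v2W <[zz o2 o2]>.
Definition hatL21 : {vspace X} := tensSub <[xx o2 o1]> <[yy o2 o1]> Wu2.
Definition hatLalpha : {vspace X} :=
  tensSub <<[:: xx o2 o1; xx o1 o2]>>%VS <[yy o2 o1]> <[zz o2 o2]>.

End BCLR.

(* Main.v *)
Require Import Defs.
From mathcomp Require Import all_boot all_order all_algebra all_field.
From mathcomp Require Import complex reals.
From mathcomp Require Import ring.
Import Order.TTheory GRing.Theory Num.Theory.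
Local Open Scope ring_scope.
Set Implicit Arguments. Unset Strict Implicit.


Section Gen.
Variable K : numFieldType.
Implicit Types (f g : X K) (a b c : M2 K).

Lemma X0 q : (0 : X K) q = 0. Proof. by rewrite ffunE. Qed.
Lemma XD f g q : (f + g) q = f q + g q. Proof. by rewrite ffunE. Qed.
Lemma XN f q : (- f) q = - f q. Proof. by rewrite ffunE. Qed.
Lemma XB f g q : (f - g) q = f q - g q. Proof. by rewrite !ffunE. Qed.
Lemma XZ (k : K) f q : (k *: f) q = k * f q. Proof. by rewrite ffunE. Qed.
Lemma M0 q : (0 : M2 K) q = 0. Proof. by rewrite ffunE. Qed.
Lemma MD a b q : (a + b) q = a q + b q. Proof. by rewrite ffunE. Qed.
Lemma MN a q : (- a) q = - a q. Proof. by rewrite ffunE. Qed.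
Lemma MB a b q : (a - b) q = a q - b q. Proof. by rewrite !ffunE. Qed.
Lemma MZ (k : K) a q : (k *: a) q = k * a q. Proof. by rewrite ffunE. Qed.
Lemma tensE a b c q : tens a b c q = a q.1.1 * b q.1.2 * c q.2. Proof. by rewrite ffunE. Qed.
Lemma e2E i j q : e2 K i j q = ((q == (i,j)) : nat)%:R. Proof. by rewrite ffunE. Qed.

Ltac evalX := rewrite ?(X0,XD,XN,XB,XZ,tensE) /= ?(M0,MD,MN,MB,MZ) /xx /yy /zz ?e2E.

Lemma ord2 (i : 'I_2) : i = o1 \/ i = o2.
Proof. case: i => [[|[|n]] H]; [left|right|by []]; exact: val_inj. Qed.

Lemma tensDl a a' b c : tens (a + a') b c = tens a b c + tens a' b c.
Proof. apply/ffunP => q; evalX; ring. Qed.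
Lemma tensDm a b b' c : tens a (b + b') c = tens a b c + tens a b' c.
Proof. apply/ffunP => q; evalX; ring. Qed.
Lemma tensDr a b c c' : tens a b (c + c') = tens a b c + tens a b c'.
Proof. apply/ffunP => q; evalX; ring. Qed.
Lemma tensZl k a b c : tens (k *: a) b c = k *: tens a b c.
Proof. apply/ffunP => q; evalX; ring. Qed.
Lemma tensZm k a b c : tens a (k *: b) c = k *: tens a b c.
Proof. apply/ffunP => q; evalX; ring. Qed.
Lemma tensZr k a b c : tens a b (k *: c) = k *: tens a b c.
Proof. apply/ffunP => q; evalX; ring. Qed.
Lemma tens0l b c : tens 0 b c = 0.
Proof. apply/ffunP => q; evalX; ring. Qed.
Lemma tens0m a c : tens a 0 c = 0.
Proof. apply/ffunP => q; evalX; ring. Qed.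
Lemma tens0r a b : tens a b 0 = 0.
Proof. apply/ffunP => q; evalX; ring. Qed.
Lemma tensNl a b c : tens (- a) b c = - tens a b c.
Proof. apply/ffunP => q; evalX; ring. Qed.
Lemma tensNm a b c : tens a (- b) c = - tens a b c.
Proof. apply/ffunP => q; evalX; ring. Qed.

Lemma rank1 a b c (p1 p2 p3 q1 q2 q3 : 'I_2 * 'I_2) :
  tens a b c (p1, p2, p3) * tens a b c (q1, q2, q3) =
  tens a b c (q1, p2, p3) * tens a b c (p1, q2, q3).
Proof. rewrite !tensE /=; ring. Qed.

Lemma span_map {vT wT : vectType K} (F : vT -> wT) (S : {vspace wT}) (s : seq vT) v :
  (forall u w, F (u + w) = F u + F w) -> (forall k u, F (k *: u) = k *: F u) ->
  {in s, forall u, F u \in S} -> v \in <<s>>%VS -> F v \in S.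
Proof.
move=> FD FZ Fs Hv; rewrite (@coord_span _ _ _ (in_tuple s) v Hv).
have F0 : F 0 = 0 by rewrite -(scale0r 0) FZ scale0r.
rewrite (big_morph F FD F0); apply: memv_suml => i _.
rewrite FZ; apply: memvZ; apply: Fs; exact: mem_nth.
Qed.

Lemma tens_in_span (sa sb sc : seq (M2 K)) (S : {vspace X K}) a b c :
  a \in <<sa>>%VS -> b \in <<sb>>%VS -> c \in <<sc>>%VS ->
  (forall a' b' c', a' \in sa -> b' \in sb -> c' \in sc -> tens a' b' c' \in S) ->
  tens a b c \in S.
Proof.
move=> Ha Hb Hc H.
apply: (@span_map _ _ (fun a => tens a b c)) Ha => [u w|k u|a' Ha']; rewrite ?tensDl ?tensZl //.
apply: (@span_map _ _ (fun b => tens a' b c)) Hb => [u w|k u|b' Hb']; rewrite ?tensDm ?tensZm //.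
apply: (@span_map _ _ (fun c => tens a' b' c)) Hc => [u w|k u|c' Hc']; rewrite ?tensDr ?tensZr //.
exact: H.
Qed.

Lemma span_vb {vT : vectType K} (U : {vspace vT}) : <<vbasis U>>%VS = U.
Proof. by case/andP: (vbasisP U) => /eqP. Qed.

Lemma memT (SA SB SC : {vspace M2 K}) a b c : a \in SA -> b \in SB -> c \in SC ->
  tens a b c \in tensSub SA SB SC.
Proof.
move=> Ha0 Hb0 Hc0.
have Ha : a \in <<vbasis SA>>%VS by rewrite span_vb.
have Hb : b \in <<vbasis SB>>%VS by rewrite span_vb.
have Hc : c \in <<vbasis SC>>%VS by rewrite span_vb.
have := @tens_in_span _ _ _ (tensSub SA SB SC) _ _ _ Ha Hb Hc. move=> H; apply: H => a1 b1 c1 Ha1 Hb1 Hc1.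
apply: memv_span.
exact: (allpairs_f (fun a bc => tens a bc.1 bc.2) Ha1 (allpairs_f (fun b c => (b,c)) Hb1 Hc1)).
Qed.

Lemma subT (SA SB SC : {vspace M2 K}) (S : {vspace X K}) :
  (forall a b c, a \in SA -> b \in SB -> c \in SC -> tens a b c \in S) ->
  (tensSub SA SB SC <= S)%VS.
Proof.
move=> H; apply/span_subvP => v /allpairsP [[a bc] [/= Ha /allpairsP [[b c] [/= Hb Hc ->]] ->]].
by apply: H; apply: vbasis_mem.
Qed.

Lemma tensSub_span sa sb sc :
  tensSub <<sa>> <<sb>> <<sc>> =
  <<[seq tens a bc.1 bc.2 | a <- sa, bc <- [seq (b, c) | b <- sb, c <- sc]]>>%VS.
Proof.
apply/eqP; rewrite eqEsubv; apply/andP; split.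
  apply: subT => a b c Ha Hb Hc.
  have := @tens_in_span _ _ _ (<<[seq tens a bc.1 bc.2 | a <- sa, bc <- [seq (b, c) | b <- sb, c <- sc]]>>%VS) _ _ _ Ha Hb Hc.
  move=> H; apply: H => a' b' c' Ha' Hb' Hc'.
  apply: memv_span.
  exact: (allpairs_f (fun a bc => tens a bc.1 bc.2) Ha' (allpairs_f (fun b c => (b,c)) Hb' Hc')).
apply/span_subvP => v /allpairsP [[a bc] [/= Ha /allpairsP [[b c] [/= Hb Hc ->]] ->]].
by apply: memT; apply: memv_span.
Qed.

End Gen.


Section Lim.
Variable K : numFieldType.
Implicit Types (f g : K -> K) (a b l : K).

Lemma near0_and (P Q : K -> Prop) : near0 P -> near0 Q -> near0 (fun t => P t /\ Q t).
Proof.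
move=> [d1 d1p H1] [d2 d2p H2].
case/orP: (real_leVge (gtr0_real d1p) (gtr0_real d2p)) => Hd.
  exists d1 => // t /andP [t0 td]; split; first by apply: H1; rewrite t0.
  by apply: H2; rewrite t0 (lt_le_trans td Hd).
exists d2 => // t /andP [t0 td]; split; last by apply: H2; rewrite t0.
by apply: H1; rewrite t0 (lt_le_trans td Hd).
Qed.

Lemma near0_ex (P : K -> Prop) : near0 P -> exists t, P t.
Proof.
move=> [d dp H]; exists (d / 2%:R); apply: H.
have h2 : 0 < d / 2%:R by rewrite divr_gt0 // ltr0n.
rewrite ger0_norm ?ltW // h2 /=.
by rewrite {2}(splitr d) ltrDl.
Qed.

Lemma near0_imp (P Q : K -> Prop) : (forall t, P t -> Q t) -> near0 P -> near0 Q.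
Proof. by move=> H [d dp HP]; exists d => // t /HP /H. Qed.

Lemma cvg0_uniq f a b : cvg0 f a -> cvg0 f b -> a = b.
Proof.
move=> Ha Hb; apply/eqP; apply/negPn/negP => nab.
have e0 : 0 < `|a - b| / 2%:R by rewrite divr_gt0 ?ltr0n // normr_gt0 subr_eq0.
have [t [ta tb]] := near0_ex (near0_and (Ha _ e0) (Hb _ e0)).
have : `|a - b| < `|a - b| / 2%:R + `|a - b| / 2%:R.
  have E : a - b = (f t - b) - (f t - a) by ring.
  rewrite {1}E; apply: le_lt_trans (ler_normB _ _) _; exact: ltrD tb ta.
by rewrite -splitr ltxx.
Qed.

Lemma cvg0_near_ext f g l : near0 (fun t => f t = g t) -> cvg0 f l -> cvg0 g l.
Proof.
move=> He Hf e e0; apply: near0_imp (near0_and He (Hf e e0)) => t [-> //].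
Qed.

Lemma cvg0_ext f g l : (forall t, f t = g t) -> cvg0 f l -> cvg0 g l.
Proof. move=> H Hf; apply: (cvg0_near_ext _ Hf); exists 1 => // t _; exact: H. Qed.

Lemma cvg0C a : cvg0 (fun _ => a) a.
Proof. by move=> e e0; exists 1 => // t _; rewrite subrr normr0. Qed.

Lemma cvg0_id : cvg0 (fun t : K => t) 0.
Proof. by move=> e e0; exists e => // t /andP [_]; rewrite subr0. Qed.

Lemma cvg0D f g a b : cvg0 f a -> cvg0 g b -> cvg0 (fun t => f t + g t) (a + b).
Proof.
move=> Hf Hg e e0.
have e2 : 0 < e / 2%:R by rewrite divr_gt0 // ltr0n.
apply: near0_imp (near0_and (Hf _ e2) (Hg _ e2)) => t [h1 h2].
have -> : f t + g t - (a + b) = (f t - a) + (g t - b) by ring.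
by apply: le_lt_trans (ler_normD _ _) _; rewrite [X in _ < X](splitr e); exact: ltrD h1 h2.
Qed.

Lemma cvg0N f a : cvg0 f a -> cvg0 (fun t => - f t) (- a).
Proof.
move=> Hf e e0; apply: near0_imp (Hf _ e0) => t.
by rewrite -opprD normrN.
Qed.

Lemma cvg0M f g a b : cvg0 f a -> cvg0 g b -> cvg0 (fun t => f t * g t) (a * b).
Proof.
move=> Hf Hg e e0.
set M := `|b| + 1; set N := `|a| + 1.
have M0 : 0 < M by rewrite ltr_pwDr ?ltr01 ?normr_ge0.
have N0 : 0 < N by rewrite ltr_pwDr ?ltr01 ?normr_ge0.
have eM : 0 < e / 2%:R / M by rewrite !divr_gt0 // ltr0n.
have eN : 0 < e / 2%:R / N by rewrite !divr_gt0 // ltr0n.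
apply: near0_imp (near0_and (Hg _ ltr01) (near0_and (Hf _ eM) (Hg _ eN))).
move=> t [h1 [h2 h3]].
have gM : `|g t| < M.
  have -> : g t = b + (g t - b) by ring.
  by apply: le_lt_trans (ler_normD _ _) _; rewrite /M ltrD2l.
have aN : `|a| < N by rewrite /N ltrDl ltr01.
have -> : f t * g t - a * b = (f t - a) * g t + a * (g t - b) by ring.
apply: le_lt_trans (ler_normD _ _) _; rewrite !normrM [X in _ < X](splitr e).
apply: ltrD.
  have -> : e / 2%:R = e / 2%:R / M * M by field; rewrite lt0r_neq0.
  by apply: ltr_pM => //; apply: normr_ge0.
have -> : e / 2%:R = N * (e / 2%:R / N) by field; rewrite lt0r_neq0.
by apply: ltr_pM => //; apply: normr_ge0.
Qed.

Lemma cvg0_sum n (F : 'I_n -> K -> K) (l : 'I_n -> K) :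
  (forall i, cvg0 (F i) (l i)) -> cvg0 (fun t => \sum_(i < n) F i t) (\sum_(i < n) l i).
Proof.
elim: n F l => [|n IH] F l H.
  by rewrite big_ord0; apply: (cvg0_ext (f := fun _ => 0)) (cvg0C 0) => t; rewrite big_ord0.
rewrite big_ord_recr; apply: (cvg0_ext (f := fun t => \sum_(i < n) F (widen_ord (leqnSn n) i) t + F ord_max t)).
  by move=> t; rewrite big_ord_recr.
apply: cvg0D => //; exact: IH.
Qed.

Definition cont0 f := cvg0 f (f 0).
Lemma cont0C a : cont0 (fun _ => a). Proof. exact: cvg0C. Qed.
Lemma cont0_id : cont0 (fun t : K => t). Proof. exact: cvg0_id. Qed.
Lemma cont0D f g : cont0 f -> cont0 g -> cont0 (fun t => f t + g t). Proof. exact: cvg0D. Qed.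
Lemma cont0N f : cont0 f -> cont0 (fun t => - f t). Proof. exact: cvg0N. Qed.
Lemma cont0M f g : cont0 f -> cont0 g -> cont0 (fun t => f t * g t). Proof. exact: cvg0M. Qed.

Definition contX (F : K -> X K) := forall q, cont0 (fun t => F t q).
Definition contM (F : K -> M2 K) := forall q, cont0 (fun t => F t q).

Lemma contXC v : contX (fun _ => v). Proof. by move=> q; apply: cont0C. Qed.
Lemma contMC v : contM (fun _ => v). Proof. by move=> q; apply: cont0C. Qed.
Lemma contXD F G : contX F -> contX G -> contX (fun t => F t + G t).
Proof.
move=> HF HG q; rewrite /cont0 ffunE.
by apply: (cvg0_ext (f := fun t => F t q + G t q)) => [t|]; rewrite ?ffunE //; apply: cont0D.
Qed.
Lemma contMD F G : contM F -> contM G -> contM (fun t => F t + G t).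
Proof.
move=> HF HG q; rewrite /cont0 ffunE.
by apply: (cvg0_ext (f := fun t => F t q + G t q)) => [t|]; rewrite ?ffunE //; apply: cont0D.
Qed.
Lemma contXN F : contX F -> contX (fun t => - F t).
Proof.
move=> HF q; rewrite /cont0 ffunE.
by apply: (cvg0_ext (f := fun t => - F t q)) => [t|]; rewrite ?ffunE //; apply: cont0N.
Qed.
Lemma contMN F : contM F -> contM (fun t => - F t).
Proof.
move=> HF q; rewrite /cont0 ffunE.
by apply: (cvg0_ext (f := fun t => - F t q)) => [t|]; rewrite ?ffunE //; apply: cont0N.
Qed.
Lemma contXB F G : contX F -> contX G -> contX (fun t => F t - G t).
Proof. by move=> HF HG; apply: contXD => //; apply: contXN. Qed.
Lemma contMB F G : contM F -> contM G -> contM (fun t => F t - G t).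
Proof. by move=> HF HG; apply: contMD => //; apply: contMN. Qed.
Lemma contXZ s F : cont0 s -> contX F -> contX (fun t => s t *: F t).
Proof.
move=> Hs HF q; rewrite /cont0 ffunE.
by apply: (cvg0_ext (f := fun t => s t * F t q)) => [t|]; rewrite ?ffunE //; apply: cont0M.
Qed.
Lemma contMZ s F : cont0 s -> contM F -> contM (fun t => s t *: F t).
Proof.
move=> Hs HF q; rewrite /cont0 ffunE.
by apply: (cvg0_ext (f := fun t => s t * F t q)) => [t|]; rewrite ?ffunE //; apply: cont0M.
Qed.
Lemma contX_tens A B C : contM A -> contM B -> contM C ->
  contX (fun t => tens (A t) (B t) (C t)).
Proof.
move=> HA HB HC q; rewrite /cont0 ffunE.
apply: (cvg0_ext (f := fun t => A t q.1.1 * B t q.1.2 * C t q.2)) => [t|]; rewrite ?ffunE //.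
by apply: cont0M; [apply: cont0M|].
Qed.

End Lim.


Section Heavy.
Variable K : numFieldType.
Local Notation x := (xx K). Local Notation y := (yy K). Local Notation z := (zz K).
Ltac evalX := rewrite ?(X0,XD,XN,XB,XZ,tensE) /= ?(M0,MD,MN,MB,MZ) /xx /yy /zz ?e2E.
Ltac ordc i := let H := fresh in case: (ord2 i) => H; subst i.
Ltac qcases q :=
  let i := fresh "i" in let j := fresh "j" in let k := fresh "k" in
  let l := fresh "l" in let m := fresh "m" in let n := fresh "n" in
  case: q => [[[i j] [k l]] [m n]]; ordc i; ordc j; ordc k; ordc l; ordc m; ordc n.

Definition Sq : X K := tens (x o2 o2) (y o1 o2 - y o1 o1) (z o1 o2)
   + tens (x o2 o2) (y o2 o2) (z o1 o1 - z o2 o1).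
Definition T6 : X K := tens (x o1 o2) (y o2 o1) (z o1 o1) + tens (x o1 o2) (y o2 o2) (z o2 o1)
  + tens (x o2 o1) (y o1 o1) (z o1 o2) + tens (x o2 o1) (y o1 o2) (z o2 o2)
  + tens (x o2 o2) (y o2 o1) (z o1 o2) + tens (x o2 o2) (y o2 o2) (z o2 o2).
Definition psum (t : K) : X K := p1 t + p2 t + p3 t + p4 t + p5 t.

Lemma sumP (t : K) : psum t = t *: T6 + t^+2 *: Sq.
Proof.
apply/ffunP => q. rewrite /psum /p1 /p2 /p3 /p4 /p5 /Sq /T6. evalX.
qcases q; rewrite /=; ring.
Qed.

Lemma T_eq : T_BCLR K = T6.
Proof.
rewrite /T_BCLR !big_ord_recr !big_ord0 /=.
apply/ffunP => q. rewrite /T6. evalX.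
qcases q; rewrite /=; ring.
Qed.
End Heavy.


Section Conc.
Variable K : numFieldType.
Local Notation x := (xx K). Local Notation y := (yy K). Local Notation z := (zz K).
Ltac evalX := rewrite ?(X0,XD,XN,XB,XZ,tensE) /= ?(M0,MD,MN,MB,MZ) /xx /yy /zz ?e2E.
Ltac ordc i := let H := fresh in case: (ord2 i) => H; subst i.
Ltac qcases q := 
  let i := fresh "i" in let j := fresh "j" in let k := fresh "k" in
  let l := fresh "l" in let m := fresh "m" in let n := fresh "n" in
  case: q => [[[i j] [k l]] [m n]]; ordc i; ordc j; ordc k; ordc l; ordc m; ordc n.

Definition a1 := tens (x o1 o2) (y o2 o1) (z o2 o2).
Definition a2 := tens (x o1 o2) (y o2 o2) (z o2 o2).
Definition c1 := tens (x o2 o1) (y o2 o1) (z o1 o2).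
Definition c2 := tens (x o2 o1) (y o2 o1) (z o2 o2).

Lemma hatL12E : hatL12 K = <<[:: a1; a2]>>%VS.
Proof. by rewrite /hatL12 -!span_seq1 tensSub_span. Qed.
Lemma hatL21E : hatL21 K = <<[:: c1; c2]>>%VS.
Proof. by rewrite /hatL21 -!span_seq1 tensSub_span. Qed.
Lemma hatLalphaE : hatLalpha K = <<[:: c2; a1]>>%VS.
Proof. by rewrite /hatLalpha -!span_seq1 tensSub_span. Qed.

Definition key := (('I_2 * 'I_2) * ('I_2 * 'I_2) * ('I_2 * 'I_2))%type.

Lemma delta_free (s : seq (X K)) (qs : 'I_(size s) -> key) :
  (forall i j : 'I_(size s), s`_i (qs j) = (i == j)%:R) -> free s.
Proof.
move=> H; apply/(@freeP _ _ _ (in_tuple s)) => k Hk i.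
have := congr1 (fun v : X K => v (qs i)) Hk; rewrite sum_ffunE X0.
rewrite (bigD1 i) //= big1 => [|j ji]; first by rewrite XZ H eqxx mulr1 addr0.
by rewrite XZ H (negbTE ji) mulr0.
Qed.

Lemma delta_decomp (s : seq (X K)) (qs : 'I_(size s) -> key) w :
  (forall i j : 'I_(size s), s`_i (qs j) = (i == j)%:R) -> w \in <<s>>%VS ->
  w = \sum_(i < size s) w (qs i) *: s`_i.
Proof.
move=> H Hw; have Hw' := @coord_span _ _ _ (in_tuple s) w Hw.
rewrite {1}Hw'; apply: eq_bigr => i _; congr (_ *: _).
rewrite {2}Hw' sum_ffunE (bigD1 i) //= big1 => [|j ji]; first by rewrite XZ H eqxx mulr1 addr0.
by rewrite XZ H (negbTE ji) mulr0.
Qed.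

Definition q1 : key := ((o1,o2),(o2,o1),(o1,o1)).
Definition q2 : key := ((o1,o2),(o2,o1),(o2,o2)).
Definition q3 : key := ((o1,o2),(o2,o2),(o2,o2)).
Definition q4 : key := ((o2,o1),(o2,o1),(o1,o2)).
Definition q5 : key := ((o2,o1),(o2,o1),(o2,o2)).
Definition qs (j : nat) : key := nth q1 [:: q1; q2; q3; q4; q5] j.
Definition qs2a (j : nat) : key := nth q2 [:: q2; q3] j.
Definition qs2b (j : nat) : key := nth q4 [:: q4; q5] j.
Definition qs2c (j : nat) : key := nth q5 [:: q5; q2] j.

Definition g1 (t : K) : X K := (@T6 K) + t *: (@Sq K).
Definition g2 (t : K) : X K := - (p3 t + p4 t + p5 t).
Definition g3 (t : K) : X K := - p2 t.
Definition g4 (t : K) : X K := - p4 t.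
Definition g5 (t : K) : X K := p3 t + p4 t.
Definition gs (t : K) : seq (X K) := [:: g1 t; g2 t; g3 t; g4 t; g5 t].
Definition e0 : seq (X K) := [:: (@T6 K); a1; a2; c1; c2].

Ltac ord5 i := case: i => [[|[|[|[|[|?]]]]] ?]; last by [].

Lemma gs_delta t (i j : 'I_(size (gs t))) : (gs t)`_i (qs j) = (i == j)%:R.
Proof.
ord5 i; rewrite /= ?/g1 ?/g2 ?/g3 ?/g4 ?/g5 /p2 /p3 /p4 /p5 /T6 /Sq; evalX;
ord5 j; rewrite /=; ring.
Qed.

Lemma e0_delta (i j : 'I_(size e0)) : e0`_i (qs j) = (i == j)%:R.
Proof.
ord5 i; rewrite /= ?/a1 ?/a2 ?/c1 ?/c2 ?/T6; evalX; ord5 j; rewrite /=; ring.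
Qed.


End Conc.


Section D.
Variable K : numFieldType.
Local Notation x := (xx K). Local Notation y := (yy K). Local Notation z := (zz K).
Ltac evalX := rewrite ?(X0,XD,XN,XB,XZ,tensE) /= ?(M0,MD,MN,MB,MZ) /xx /yy /zz ?e2E.
Ltac ord5 i := case: i => [[|[|[|[|[|?]]]]] ?]; last by [].
Local Notation gs := (@gs K). Local Notation e0 := (@e0 K).
Local Notation g1 := (@g1 K). Local Notation g2 := (@g2 K). Local Notation g3 := (@g3 K).
Local Notation g4 := (@g4 K). Local Notation g5 := (@g5 K).
Local Notation a1 := (@a1 K). Local Notation a2 := (@a2 K). Local Notation c1 := (@c1 K). Local Notation c2 := (@c2 K).
Lemma g0_e0 : gs 0 = e0.
Proof.
rewrite /gs /e0 /g1 /g2 /g3 /g4 /g5 /p2 /p3 /p4 /p5.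
rewrite /gs /e0 /g1 /g2 /g3 /g4 /g5 /p2 /p3 /p4 /p5 !scale0r !subr0 !addr0.
rewrite ?opprK ?addr0 ?sub0r ?tensDl ?tensDm ?tensDr ?tensNm.
by rewrite !addrK opprK opprB [X in X - _]addrC addrK.
Qed.

Lemma p_in_E (t : K) : [/\ p1 t \in Ecurve t, p2 t \in Ecurve t, p3 t \in Ecurve t,
   p4 t \in Ecurve t & p5 t \in Ecurve t].
Proof. by split; apply: memv_span; rewrite !inE eqxx ?orbT. Qed.

Lemma basis_gs (t : K) : t != 0 -> basis_of (Ecurve t) (gs t).
Proof.
move=> t0.
have fr : free (gs t) by apply: (@delta_free K (gs t) (fun j => qs j)); exact: gs_delta.
rewrite /basis_of fr andbT eqEdim; apply/andP; split.
  have [h1 h2 h3 h4 h5] := p_in_E t.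
  apply/span_subvP => v; rewrite !inE => /predU1P [->|/predU1P [->|/predU1P [->|/predU1P [->|/eqP ->]]]]; rewrite ?/g1 ?/g2 ?/g3 ?/g4 ?/g5.
  - have <- : t^-1 *: psum t = (@T6 K) + t *: (@Sq K).
      by rewrite sumP scalerDr !scalerA mulVf // scale1r expr2 mulrA mulVf // mul1r.
    by rewrite /psum; apply: memvZ; rewrite !memvD.
  - by rewrite memvN !memvD.
  - by rewrite memvN.
  - by rewrite memvN.
  - by rewrite memvD.
by move: fr => /eqP ->; apply: dim_span.
Qed.

Lemma g1_psum (t : K) : t != 0 -> t^-1 *: (p1 t + p2 t + p3 t + p4 t + p5 t) = g1 t.
Proof.
move=> t0; have := sumP t; rewrite /psum => ->.
by rewrite scalerDr !scalerA mulVf // scale1r expr2 mulrA mulVf // mul1r.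
Qed.

Lemma cont_g1 : contX g1.
Proof. by apply: contXD; [apply: contXC | apply: contXZ; [apply: cont0_id | apply: contXC]]. Qed.

Ltac contt := repeat match goal with
 | |- contX (fun _ => ?v) => apply: contXC
 | |- contM (fun _ => ?v) => apply: contMC
 | |- cont0 (fun _ => ?v) => apply: cont0C
 | |- cont0 (fun t => t) => apply: cont0_id
 | |- contX (fun t => @?F t + @?G t) => apply: (@contXD _ F G)
 | |- contX (fun t => - @?F t) => apply: (@contXN _ F)
 | |- contX (fun t => @?s t *: @?F t) => apply: (@contXZ _ s F)
 | |- contX (fun t => tens (@?A t) (@?B t) (@?C t)) => apply: (@contX_tens _ A B C)
 | |- contM (fun t => @?F t + @?G t) => apply: (@contMD _ F G)
 | |- contM (fun t => - @?F t) => apply: (@contMN _ F)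
 | |- contM (fun t => @?s t *: @?F t) => apply: (@contMZ _ s F)
 end.

Lemma cont_g2 : contX g2. Proof. rewrite /g2 /p3 /p4 /p5; contt. Qed.
Lemma cont_g3 : contX g3. Proof. rewrite /g3 /p2; contt. Qed.
Lemma cont_g4 : contX g4. Proof. rewrite /g4 /p4; contt. Qed.
Lemma cont_g5 : contX g5. Proof. rewrite /g5 /p3 /p4; contt. Qed.

Lemma gs_cont (i : 'I_5) p : cont0 (fun t => (gs t)`_i p).
Proof.
ord5 i; rewrite /=.
- exact: cont_g1. - exact: cont_g2. - exact: cont_g3. - exact: cont_g4. - exact: cont_g5.
Qed.

Lemma free_e0 : free e0.
Proof. by apply: (@delta_free K e0 (fun j => qs j)); exact: e0_delta. Qed.

Lemma E0E : (<[T_BCLR K]> + hatL12 K + hatL21 K)%VS = <<e0>>%VS.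
Proof. by rewrite T_eq hatL12E hatL21E -span_seq1 -!span_cat. Qed.


Lemma gs_decomp (t : K) w : w \in <<gs t>>%VS -> w = \sum_(i < 5) w (qs i) *: (gs t)`_i.
Proof. move=> Hw; exact: (@delta_decomp K (gs t) (fun j => qs j) w (@gs_delta K t) Hw). Qed.

Lemma limit_in (f : K -> 5.-tuple (X K)) (e : 5.-tuple (X K)) :
  near0 (fun t => basis_of (Ecurve t) (f t)) ->
  (forall l p, cvg0 (fun t => tnth (f t) l p) (tnth e l p)) ->
  forall l, tnth e l \in <<e0>>%VS.
Proof.
move=> Hb Hc l.
have -> : tnth e l = \sum_(i < 5) tnth e l (qs i) *: (gs 0)`_i.
  apply/ffunP => p; rewrite sum_ffunE.
  under eq_bigr => i _ do rewrite XZ.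
  apply: (cvg0_uniq (Hc l p)).
  apply: (cvg0_near_ext (f := fun t => \sum_(i < 5) tnth (f t) l (qs i) * (gs t)`_i p)).
    case: Hb => d dp Hd; exists d => // t Ht.
    have t0 : t != 0 by rewrite -normr_gt0; case/andP: Ht.
    have /andP [/eqP Espan _] := Hd t Ht.
    have Hm : tnth (f t) l \in <<gs t>>%VS.
      case/andP: (basis_gs t0) => /eqP -> _.
      by rewrite -Espan; apply: memv_span; apply: mem_tnth.
    by rewrite {2}(gs_decomp Hm) sum_ffunE; apply: eq_bigr => i _; rewrite XZ.
  apply: cvg0_sum => i; apply: cvg0M; [exact: Hc | exact: gs_cont i p].
rewrite g0_e0; apply: memv_suml => i _; apply: memvZ; apply: memv_span; apply: mem_nth.
by rewrite (ltn_ord i).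
Qed.

Lemma dim_e0 : \dim <<e0>>%VS = 5%N.
Proof. by rewrite (eqP free_e0). Qed.

Lemma limit_unique E : grass_limit 5 (@Ecurve K) E -> E = <<e0>>%VS.
Proof.
case=> f [e [Hb Hc He]].
have sub : (E <= <<e0>>)%VS.
  case/andP: He => /eqP <- _.
  apply/span_subvP => v /tnthP [l ->]; exact: limit_in Hb Hc l.
by apply/eqP; rewrite eqEdim sub /= dim_e0 (size_basis He).
Qed.

Definition gt (t : K) : 5.-tuple (X K) := [tuple g1 t; g2 t; g3 t; g4 t; g5 t].

Lemma limit_exists : grass_limit 5 (@Ecurve K) <<e0>>%VS.
Proof.
exists gt, (gt 0); split.
- exists 1 => // t /andP [Ht _]; apply: basis_gs; by rewrite -normr_gt0.
- move=> l p; apply: (cvg0_ext (f := fun t => (gs t)`_l p)).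
    by move=> t; rewrite (tnth_nth 0).
  rewrite (tnth_nth 0); exact: gs_cont.
- have -> : (gt 0 : seq _) = e0 by rewrite -g0_e0.
  by rewrite /basis_of eqxx free_e0.
Qed.

End D.


Section E.
Variable K : numFieldType.
Local Notation x := (xx K). Local Notation y := (yy K). Local Notation z := (zz K).
Ltac evalX := rewrite ?(X0,XD,XN,XB,XZ,tensE) /= ?(M0,MD,MN,MB,MZ) /xx /yy /zz ?e2E.
Local Notation e0 := (@e0 K).
Local Notation a1 := (@a1 K). Local Notation a2 := (@a2 K). Local Notation c1 := (@c1 K). Local Notation c2 := (@c2 K).
Local Notation T6 := (@T6 K).

Lemma e2_neq0 i j : e2 K i j != 0.
Proof.
apply/eqP => /ffunP /(_ (i, j)); rewrite e2E M0 eqxx /= => /eqP.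
by rewrite oner_eq0.
Qed.

Lemma isSeg_tens a b c : a \in Aspace K -> tens a b c != 0 -> isSeg (tens a b c).
Proof.
move=> Ha H; exists a, b, c; split => //; rewrite ?memvf //; split.
- by apply: contraNneq H => ->; rewrite tens0l.
- by apply: contraNneq H => ->; rewrite tens0m.
- by apply: contraNneq H => ->; rewrite tens0r.
Qed.

Definition wv (l b1 b2 g1 g2 : K) : X K :=
  l *: T6 + b1 *: a1 + b2 *: a2 + g1 *: c1 + g2 *: c2.

Definition k0 : key := ((o2,o2),(o2,o1),(o1,o2)).
Definition kk : seq key := [:: k0; ((o2,o1),(o1,o1),(o1,o2)); ((o2,o1),(o2,o1),(o1,o2));
  ((o2,o2),(o1,o1),(o1,o2)); ((o1,o2),(o2,o2),(o2,o2)); ((o2,o1),(o2,o2),(o2,o2));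
  ((o1,o2),(o2,o1),(o1,o2)); ((o2,o1),(o2,o1),(o2,o2)); ((o1,o2),(o2,o1),(o2,o2))].
Definition ks (j : nat) : key := nth k0 kk j.

Lemma wv_ks l b1 b2 g1 g2 (j : nat) :
  wv l b1 b2 g1 g2 (ks j) = nth l [:: l; l; g1; 0; b2; 0; 0; g2; b1] j.
Proof.
rewrite /wv /T6 /a1 /a2 /c1 /c2; evalX.
rewrite /ks /kk; case: j => [|[|[|[|[|[|[|[|[|j]]]]]]]]]; rewrite /= ?nth_nil /=; ring.
Qed.

Lemma seg_rank1 (w : X K) : isSeg w -> forall P Q : key,
  w P * w Q = w (Q.1.1, P.1.2, P.2) * w (P.1.1, Q.1.2, Q.2).
Proof. by case=> a [b [c [_ _ _ _ ->]]] [[p1 p2] p3] [[q1 q2] q3]; apply: rank1. Qed.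

Lemma rank1_coeffs l b1 b2 g1 g2 :
  isSeg (wv l b1 b2 g1 g2) ->
  [/\ l = 0, b2 * g1 = 0, b2 * g2 = 0 & b1 * g1 = 0].
Proof.
move=> Hw.
have r1 : wv l b1 b2 g1 g2 (ks 0) * wv l b1 b2 g1 g2 (ks 1) =
          wv l b1 b2 g1 g2 (ks 2) * wv l b1 b2 g1 g2 (ks 3) := seg_rank1 Hw (ks 0) (ks 1).
have r2 : wv l b1 b2 g1 g2 (ks 4) * wv l b1 b2 g1 g2 (ks 2) =
          wv l b1 b2 g1 g2 (ks 5) * wv l b1 b2 g1 g2 (ks 6) := seg_rank1 Hw (ks 4) (ks 2).
have r3 : wv l b1 b2 g1 g2 (ks 4) * wv l b1 b2 g1 g2 (ks 7) =
          wv l b1 b2 g1 g2 (ks 5) * wv l b1 b2 g1 g2 (ks 8) := seg_rank1 Hw (ks 4) (ks 7).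
have r4 : wv l b1 b2 g1 g2 (ks 8) * wv l b1 b2 g1 g2 (ks 2) =
          wv l b1 b2 g1 g2 (ks 7) * wv l b1 b2 g1 g2 (ks 6) := seg_rank1 Hw (ks 8) (ks 2).
move: r1 r2 r3 r4; rewrite !wv_ks /= !mul0r !mulr0 => r1 r2 r3 r4.
split => //.
by move/eqP: r1; rewrite mulf_eq0 orbb => /eqP.
Qed.



Lemma a1q2 : a1 q2 = 1. Proof. by rewrite /a1 tensE /= /xx /yy /zz !e2E /= ?(mulr0,mul0r,mulr1,mul1r). Qed.
Lemma a1q3 : a1 q3 = 0. Proof. by rewrite /a1 tensE /= /xx /yy /zz !e2E /= ?(mulr0,mul0r,mulr1,mul1r). Qed.
Lemma a1q5 : a1 q5 = 0. Proof. by rewrite /a1 tensE /= /xx /yy /zz !e2E /= ?(mulr0,mul0r,mulr1,mul1r). Qed.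
Lemma a2q2 : a2 q2 = 0. Proof. by rewrite /a2 tensE /= /xx /yy /zz !e2E /= ?(mulr0,mul0r,mulr1,mul1r). Qed.
Lemma a2q3 : a2 q3 = 1. Proof. by rewrite /a2 tensE /= /xx /yy /zz !e2E /= ?(mulr0,mul0r,mulr1,mul1r). Qed.
Lemma c1q4 : c1 q4 = 1. Proof. by rewrite /c1 tensE /= /xx /yy /zz !e2E /= ?(mulr0,mul0r,mulr1,mul1r). Qed.
Lemma c1q5 : c1 q5 = 0. Proof. by rewrite /c1 tensE /= /xx /yy /zz !e2E /= ?(mulr0,mul0r,mulr1,mul1r). Qed.
Lemma c2q4 : c2 q4 = 0. Proof. by rewrite /c2 tensE /= /xx /yy /zz !e2E /= ?(mulr0,mul0r,mulr1,mul1r). Qed.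
Lemma c2q5 : c2 q5 = 1. Proof. by rewrite /c2 tensE /= /xx /yy /zz !e2E /= ?(mulr0,mul0r,mulr1,mul1r). Qed.
Lemma c2q2 : c2 q2 = 0. Proof. by rewrite /c2 tensE /= /xx /yy /zz !e2E /= ?(mulr0,mul0r,mulr1,mul1r). Qed.

Lemma span2_delta (u1 u2 : X K) (k1 k2 : key) :
  u1 k1 = 1 -> u1 k2 = 0 -> u2 k1 = 0 -> u2 k2 = 1 ->
  forall i j : 'I_(size [:: u1; u2]),
    [:: u1; u2]`_i ((fun j : nat => nth k1 [:: k1; k2] j) j) = (i == j)%:R.
Proof.
move=> h1 h2 h3 h4 i j.
by case: i => [[|[|?]] ?] //; case: j => [[|[|?]] ?] //=.
Qed.

Lemma span2_free (u1 u2 : X K) (k1 k2 : key) :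
  u1 k1 = 1 -> u1 k2 = 0 -> u2 k1 = 0 -> u2 k2 = 1 -> free [:: u1; u2].
Proof. by move=> h1 h2 h3 h4; apply: (delta_free (span2_delta h1 h2 h3 h4)). Qed.

Lemma span2_decomp (u1 u2 : X K) (k1 k2 : key) v :
  u1 k1 = 1 -> u1 k2 = 0 -> u2 k1 = 0 -> u2 k2 = 1 ->
  v \in <<[:: u1; u2]>>%VS -> v = v k1 *: u1 + v k2 *: u2.
Proof.
move=> h1 h2 h3 h4 Hv.
rewrite {1}(delta_decomp (span2_delta h1 h2 h3 h4) Hv).
by rewrite !big_ord_recr big_ord0 /= add0r.
Qed.

Lemma e0_wv v : v \in <<e0>>%VS -> v = wv (v q1) (v q2) (v q3) (v q4) (v q5).
Proof.
move=> Hv; rewrite {1}(delta_decomp (@e0_delta K) Hv).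
by rewrite !big_ord_recr big_ord0 /= add0r.
Qed.

End E.


Section F.
Variable K : numFieldType.
Local Notation x := (xx K). Local Notation y := (yy K). Local Notation z := (zz K).
Local Notation e0 := (@e0 K).
Local Notation a1 := (@a1 K). Local Notation a2 := (@a2 K). Local Notation c1 := (@c1 K). Local Notation c2 := (@c2 K).
Local Notation T6 := (@T6 K).

Lemma mem2 (u1 u2 : X K) k1 k2 : k1 *: u1 + k2 *: u2 \in <<[:: u1; u2]>>%VS.
Proof. by rewrite memvD // memvZ // memv_span // !inE eqxx ?orbT. Qed.

Lemma sub_e0 : [/\ (<<[:: a1; a2]>> <= <<e0>>)%VS, (<<[:: c1; c2]>> <= <<e0>>)%VS
   & (<<[:: c2; a1]>> <= <<e0>>)%VS].
Proof.
by split; apply/span_subvP => u; rewrite !inE => /orP [] /eqP ->;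
  apply: memv_span; rewrite !inE eqxx ?orbT.
Qed.

Lemma part1_fwd v : v != 0 -> v \in <<e0>>%VS -> isSeg v ->
  [\/ v \in <<[:: a1; a2]>>%VS, v \in <<[:: c1; c2]>>%VS | v \in <<[:: c2; a1]>>%VS].
Proof.
move=> v0 Hv; move: (e0_wv Hv) v0; move: (v q1) (v q2) (v q3) (v q4) (v q5).
move=> l b1 b2 g1 g2 -> v0 Hs.
have [l0 e1 e2 e3] := rank1_coeffs Hs.
rewrite /wv l0 scale0r add0r.
have [g10|g1n] := eqVneq g1 0; have [g20|g2n] := eqVneq g2 0.
- by constructor 1; rewrite g10 g20 !scale0r !addr0 mem2.
- have b20 : b2 = 0 by move/eqP: e2; rewrite mulf_eq0 (negbTE g2n) orbF => /eqP.
  have [b10|b1n] := eqVneq b1 0.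
    by constructor 2; rewrite b10 b20 !scale0r !add0r mem2.
  have : g1 = 0 by move/eqP: e3; rewrite mulf_eq0 (negbTE b1n) /= => /eqP.
  by move=> g10'; constructor 3; rewrite b20 g10' !scale0r !addr0 addrC mem2.
- have b20 : b2 = 0 by move/eqP: e1; rewrite mulf_eq0 (negbTE g1n) orbF => /eqP.
  have [b10|b1n] := eqVneq b1 0.
    by constructor 2; rewrite b10 b20 !scale0r !add0r mem2.
  by move/eqP: e3; rewrite mulf_eq0 (negbTE b1n) (negbTE g1n).
- have b20 : b2 = 0 by move/eqP: e1; rewrite mulf_eq0 (negbTE g1n) orbF => /eqP.
  have [b10|b1n] := eqVneq b1 0.
    by constructor 2; rewrite b10 b20 !scale0r !add0r mem2.
  by move/eqP: e3; rewrite mulf_eq0 (negbTE b1n) (negbTE g1n).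
Qed.

Lemma x_in_A i j : (i, j) != (o1, o1) -> x i j \in Aspace K.
Proof.
move=> ij; case: (ord2 i) (ord2 j) ij => -> [] -> ij; try by rewrite eqxx in ij.
all: by apply: memv_span; rewrite !inE eqxx ?orbT.
Qed.

Lemma seg_alpha v : v != 0 -> v \in <<[:: c2; a1]>>%VS -> isSeg v.
Proof.
move=> v0 Hv; rewrite (span2_decomp (c2q5 K) (c2q2 K) (a1q5 K) (a1q2 K) Hv) in v0 *.
have -> : v q5 *: c2 + v q2 *: a1 = tens (v q5 *: x o2 o1 + v q2 *: x o1 o2) (y o2 o1) (z o2 o2).
  by rewrite tensDl !tensZl.
apply: isSeg_tens; last by rewrite tensDl !tensZl.
by rewrite memvD // memvZ // x_in_A.
Qed.

Lemma part1_bwd v : v != 0 ->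
  [\/ v \in <<[:: a1; a2]>>%VS, v \in <<[:: c1; c2]>>%VS | v \in <<[:: c2; a1]>>%VS] ->
  v \in <<e0>>%VS /\ isSeg v.
Proof.
have [s1 s2 s3] := sub_e0.
move=> v0 [] Hv; split; rewrite ?(subvP s1 _ Hv) ?(subvP s2 _ Hv) ?(subvP s3 _ Hv) //.
- rewrite (span2_decomp (a1q2 K) (a1q3 K) (a2q2 K) (a2q3 K) Hv) in v0 *.
  have -> : v q2 *: a1 + v q3 *: a2 = tens (x o1 o2) (v q2 *: y o2 o1 + v q3 *: y o2 o2) (z o2 o2).
    by rewrite tensDm !tensZm.
  apply: isSeg_tens; last by rewrite tensDm !tensZm.
  exact: x_in_A.
- rewrite (span2_decomp (c1q4 K) (c1q5 K) (c2q4 K) (c2q5 K) Hv) in v0 *.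
  have -> : v q4 *: c1 + v q5 *: c2 = tens (x o2 o1) (y o2 o1) (v q4 *: z o1 o2 + v q5 *: z o2 o2).
    by rewrite tensDr !tensZr.
  apply: isSeg_tens; last by rewrite tensDr !tensZr.
  exact: x_in_A.
- exact: seg_alpha.
Qed.

Lemma segLine_alpha : segLine <<[:: c2; a1]>>%VS.
Proof.
split; last by move=> v Hv v0; exact: seg_alpha v0 Hv.
by rewrite (eqP (span2_free (c2q5 K) (c2q2 K) (a1q5 K) (a1q2 K))).
Qed.

Lemma a1_neq0 : a1 != 0.
Proof. by apply/eqP => h; move: (a1q2 K); rewrite h X0 => /eqP; rewrite eq_sym oner_eq0. Qed.
Lemma c2_neq0 : c2 != 0.
Proof. by apply/eqP => h; move: (c2q5 K); rewrite h X0 => /eqP; rewrite eq_sym oner_eq0. Qed.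

Lemma meets_alpha : meets <<[:: c2; a1]>>%VS <<[:: a1; a2]>>%VS /\
                    meets <<[:: c2; a1]>>%VS <<[:: c1; c2]>>%VS.
Proof.
split.
  by exists a1; rewrite ?a1_neq0 // memv_cap !memv_span // !inE eqxx ?orbT.
by exists c2; rewrite ?c2_neq0 // memv_cap !memv_span // !inE eqxx ?orbT.
Qed.

Lemma line_unique (L : {vspace X K}) : segLine L -> meets L <<[:: a1; a2]>>%VS ->
  meets L <<[:: c1; c2]>>%VS -> L = <<[:: c2; a1]>>%VS.
Proof.
case=> dL HL [v v0] /[!memv_cap] /andP [vL Hv] [w w0] /[!memv_cap] /andP [wL Hw].
move: (span2_decomp (a1q2 K) (a1q3 K) (a2q2 K) (a2q3 K) Hv) (span2_decomp (c1q4 K) (c1q5 K) (c2q4 K) (c2q5 K) Hw) v0 w0 vL wL.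
move: (v q2) (v q3) (w q4) (w q5) => b1 b2 g1 g2 -> -> v0 w0 vL wL.
have uE : (b1 *: a1 + b2 *: a2) + (g1 *: c1 + g2 *: c2) = wv 0 b1 b2 g1 g2.
  by rewrite /wv scale0r add0r !addrA.
have uL : wv 0 b1 b2 g1 g2 \in L by rewrite -uE memvD.
have u0 : wv 0 b1 b2 g1 g2 != 0.
  apply: contraNneq v0 => h.
  have hb1 := wv_ks 0 b1 b2 g1 g2 8; have hb2 := wv_ks 0 b1 b2 g1 g2 4.
  rewrite h in hb1 hb2; rewrite X0 /= in hb1; rewrite X0 /= in hb2; by rewrite -hb1 -hb2 !scale0r addr0.
have [_ e1 e2 e3] := rank1_coeffs (HL _ uL u0).
have b20 : b2 = 0.
  have [g10|g1n] := eqVneq g1 0.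
    have [g20|g2n] := eqVneq g2 0.
      by move: w0; rewrite g10 g20 !scale0r addr0 eqxx.
    by move/eqP: e2; rewrite mulf_eq0 (negbTE g2n) orbF => /eqP.
  by move/eqP: e1; rewrite mulf_eq0 (negbTE g1n) orbF => /eqP.
have b1n : b1 != 0 by apply: contraNneq v0 => b10; rewrite b10 b20 !scale0r addr0.
have g10 : g1 = 0 by move/eqP: e3; rewrite mulf_eq0 (negbTE b1n) /= => /eqP.
have g2n : g2 != 0 by apply: contraNneq w0 => g20; rewrite g10 g20 !scale0r addr0.
rewrite b20 g10 !scale0r addr0 add0r in vL wL.
have sub : (<<[:: c2; a1]>> <= L)%VS.
  apply/span_subvP => u; rewrite !inE => /orP [] /eqP ->.
    by rewrite -[c2](scalerK g2n) memvZ.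
  by rewrite -[a1](scalerK b1n) memvZ.
apply/esym/eqP; rewrite eqEdim sub dL.
by rewrite (eqP (span2_free (c2q5 K) (c2q2 K) (a1q5 K) (a1q2 K))).
Qed.

End F.


Section G.
Variable K : numFieldType.
Local Notation x := (xx K). Local Notation y := (yy K). Local Notation z := (zz K).
Local Notation e0 := (@e0 K).
Local Notation a1 := (@a1 K). Local Notation a2 := (@a2 K). Local Notation c1 := (@c1 K). Local Notation c2 := (@c2 K).
Local Notation T6 := (@T6 K).

Lemma e0_ABC : (<<e0>> <= ABC K)%VS.
Proof.
have mt : forall i j b c, (i, j) != (o1, o1) -> tens (x i j) b c \in ABC K.
  by move=> i j b c ij; apply: memT; rewrite ?memvf ?x_in_A.
apply/span_subvP => u; rewrite !inE => /orP [/eqP ->|/orP [/eqP ->|/orP [/eqP ->|/orP [/eqP ->|/eqP ->]]]];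
  rewrite ?/a1 ?/a2 ?/c1 ?/c2 ?/T6 ?mt //.
by rewrite !memvD ?mt.
Qed.

Lemma inL (U V : {vspace X K}) v : v \in U -> v \in (U + V)%VS.
Proof. exact: (subvP (addvSl U V)). Qed.
Lemma inR (U V : {vspace X K}) v : v \in V -> v \in (U + V)%VS.
Proof. exact: (subvP (addvSr U V)). Qed.

Lemma span2_full (U : {vspace M2 K}) (s : seq (M2 K)) u1 u2 :
  U = <<s>>%VS -> size s = 2%N -> u1 \in U -> u2 \in U -> free [:: u1; u2] ->
  U = <<[:: u1; u2]>>%VS.
Proof.
move=> UE s2 h1 h2 fr; apply/esym/eqP; rewrite eqEdim (eqP fr).
have -> : (<<[:: u1; u2]>> <= U)%VS.
  by apply/span_subvP => u; rewrite !inE => /orP [] /eqP ->.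
by rewrite UE; apply: leq_trans (dim_span s) _; rewrite s2.
Qed.

Lemma tangent (b1 b2 d1 d2 : M2 K) :
  b1 \in v2W K -> b2 \in v2W K -> free [:: b1; b2] ->
  d1 \in Wu2 K -> d2 \in Wu2 K -> free [:: d1; d2] ->
  T_BCLR K \in
    (segTan (x o1 o2) b1 (z o2 o2) + segTan (x o1 o2) b2 (z o2 o2)
     + segTan (x o2 o1) (y o2 o1) d1 + segTan (x o2 o1) (y o2 o1) d2)%VS.
Proof.
move=> hb1 hb2 fb hd1 hd2 fd.
have VE := span2_full (erefl (v2W K)) (erefl _) hb1 hb2 fb.
have WE := span2_full (erefl (Wu2 K)) (erefl _) hd1 hd2 fd.
have y21V : y o2 o1 \in <<[:: b1; b2]>>%VS by rewrite -VE memv_span // !inE eqxx.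
have y22V : y o2 o2 \in <<[:: b1; b2]>>%VS by rewrite -VE memv_span // !inE eqxx ?orbT.
have z12W : z o1 o2 \in <<[:: d1; d2]>>%VS by rewrite -WE memv_span // !inE eqxx.
have z22W : z o2 o2 \in <<[:: d1; d2]>>%VS by rewrite -WE memv_span // !inE eqxx ?orbT.
set S := (_ + _ + _ + _)%VS.
have inb : forall a c b, b \in <<[:: b1; b2]>>%VS -> tens a b1 c \in S -> tens a b2 c \in S ->
    tens a b c \in S.
  move=> a c b Hb h1 h2.
  apply: (@tens_in_span K [:: a] [:: b1; b2] [:: c] S a b c) => //; rewrite ?memv_span ?mem_head //.
  by move=> a' b' c'; rewrite !inE => /eqP -> /orP [] /eqP -> /eqP ->.
have ind : forall a b c, c \in <<[:: d1; d2]>>%VS -> tens a b d1 \in S -> tens a b d2 \in S ->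
    tens a b c \in S.
  move=> a b c Hc h1 h2.
  apply: (@tens_in_span K [:: a] [:: b] [:: d1; d2] S a b c) => //; rewrite ?memv_span ?mem_head //.
  by move=> a' b' c'; rewrite !inE => /eqP -> /eqP -> /orP [] /eqP ->.
have A22 : x o2 o2 \in Aspace K by rewrite x_in_A.
rewrite T_eq /T6 !memvD //.
- by apply: inb => //; [apply/inL/inL/inL|apply/inL/inL/inR]; apply: inR; apply: memT;
    rewrite ?memv_line ?memvf.
- by apply: inb => //; [apply/inL/inL/inL|apply/inL/inL/inR]; apply: inR; apply: memT;
    rewrite ?memv_line ?memvf.
- by apply: ind => //; [apply/inL/inR|apply/inR]; apply/inL/inR; apply: memT;
    rewrite ?memv_line ?memvf.
- by apply: ind => //; [apply/inL/inR|apply/inR]; apply/inL/inR; apply: memT;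
    rewrite ?memv_line ?memvf.
- by apply: ind => //; [apply/inL/inR|apply/inR]; apply/inL/inL; apply: memT;
    rewrite ?memv_line ?memvf.
- by apply: inb => //; [apply/inL/inL/inL|apply/inL/inL/inR]; apply/inL/inL; apply: memT;
    rewrite ?memv_line ?memvf.
Qed.

End G.

Unset Implicit Arguments.
Theorem mainTheorem2 (R : realType) :
  (* T_BCLR = lim_{t->0} (1/t)(p_1(t) + ... + p_5(t)) *)
  (forall q, cvg0 (fun t : R[i] => (t^-1 *: (p1 t + p2 t + p3 t + p4 t + p5 t)) q)
                  (T_BCLR R[i] q)) /\
  (* the limit E^BCLR exists in G(5, A (x) B (x) C) *)
  (exists E, grass_limit 5 (@Ecurve R[i]) E) /\
  (* side facts of (1) *)
  (zz R[i] o2 o2 \in Wu2 R[i] /\ yy R[i] o2 o1 \in v2W R[i]) /\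
  (* L_alpha is the unique line in the Segre meeting L_12 and L_21,
     and it lies in their span *)
  [/\ segLine (hatLalpha R[i]), meets (hatLalpha R[i]) (hatL12 R[i]),
      meets (hatLalpha R[i]) (hatL21 R[i]),
      (forall L : {vspace X R[i]}, segLine L -> meets L (hatL12 R[i]) ->
          meets L (hatL21 R[i]) -> L = hatLalpha R[i]) &
      (hatLalpha R[i] <= hatL12 R[i] + hatL21 R[i])%VS] /\
  (* (3) for any two distinct points on L_12 and any two on L_21 *)
  (forall b1 b2 c1 c2 : M2 R[i],
      b1 \in v2W R[i] -> b2 \in v2W R[i] -> free [:: b1; b2] ->
      c1 \in Wu2 R[i] -> c2 \in Wu2 R[i] -> free [:: c1; c2] ->
      T_BCLR R[i] \in
        (segTan (xx R[i] o1 o2) b1 (zz R[i] o2 o2)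
         + segTan (xx R[i] o1 o2) b2 (zz R[i] o2 o2)
         + segTan (xx R[i] o2 o1) (yy R[i] o2 o1) c1
         + segTan (xx R[i] o2 o1) (yy R[i] o2 o1) c2)%VS) /\
  forall E : {vspace X R[i]}, grass_limit 5 (@Ecurve R[i]) E ->
    [/\ (* (1) P E^BCLR meets the Segre exactly in L_12 u L_21 u L_alpha *)
        (forall v : X R[i], v != 0 ->
           (v \in E /\ isSeg v) <->
           [\/ v \in hatL12 R[i], v \in hatL21 R[i] | v \in hatLalpha R[i]]),
        (* E^BCLR lies in G(5, A (x) B (x) C) *)
        (E <= ABC R[i])%VS &
        (* (2) *)
        E = (<[T_BCLR R[i]]> + hatL12 R[i] + hatL21 R[i])%VS].
Proof.
split.
  move=> q.
  have -> : T_BCLR R[i] q = g1 0 q by rewrite /g1 scale0r addr0 T_eq.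
  apply: (cvg0_near_ext _ (cont_g1 q)).
  exists 1 => // t /andP [Ht _].
  have t0 : t != 0 by rewrite -normr_gt0.
  by rewrite g1_psum.
split; first by exists <<e0 R[i]>>%VS; exact: limit_exists.
split; first by split; apply: memv_span; rewrite !inE eqxx ?orbT.
split.
  rewrite hatLalphaE hatL12E hatL21E; have [m1 m2] := meets_alpha R[i].
  split; [exact: segLine_alpha | exact: m1 | exact: m2 | exact: line_unique |].
  by apply/span_subvP => u; rewrite !inE => /orP [] /eqP ->;
      [apply: inR | apply: inL]; apply: memv_span; rewrite !inE eqxx ?orbT.
split; first exact: tangent.
move=> E HE; rewrite (limit_unique HE) E0E; split.
- move=> v v0; rewrite hatLalphaE hatL12E hatL21E; split.
    by case=> Hv Hs; apply: part1_fwd.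
  exact: part1_bwd.
- exact: e0_ABC.
- by [].
Qed.
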